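(* Let $E$ be a set of finite measure and let $(F_n)\subset L^{3/2}(E,\mathbb{R}^3)$ be bounded. Assume that for some $F\in L^{3/2}(E,\mathbb{R}^3)$ and some $\theta>0$ one has $$\left(\left(|F_n|^{-1/2}F_n-|F|^{-1/2}F\right)\cdot(F_n-F)\right)^\theta\to0\quad\text{in }L^1(E).$$ Then $F_n\to F$ in $L^p(E,\mathbb{R}^3)$ for any $1\le p<3/2$.
   Context: $|v|^{-1/2}v$ is interpreted as $0$ where $v=0$. *)

(* Defs.v *)
From HB Require Import structures.
From mathcomp Require Import all_boot all_order all_algebra.
From mathcomp Require Import all_classical all_reals all_analysis.
Set Implicit Arguments. Unset Strict Implicit. Unset Printing Implicit Defensive.
Import Order.TTheory GRing.Theory Num.Theory.
Local Open Scope ring_scope.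

Definition dot3 {R : realType} (u v : 'rV[R]_3) : R := \sum_(i < 3) u ord0 i * v ord0 i.
Definition enorm3 {R : realType} (v : 'rV[R]_3) : R := Num.sqrt (dot3 v v).

Definition jmap {R : realType} (v : 'rV[R]_3) : 'rV[R]_3 :=
  if v == 0 then 0 else (powR (enorm3 v) (- (2^-1))) *: v.

Definition meas3 {d : measure_display} {T : measurableType d} {R : realType}
  (E : set T) (F : T -> 'rV[R]_3) : Prop :=
  forall i : 'I_3, measurable_fun E (fun x => F x ord0 i).

Definition intp {d : measure_display} {T : measurableType d} {R : realType}
  (mu : {measure set T -> \bar R}) (E : set T) (p : R) (F : T -> 'rV[R]_3) : \bar R :=
  (\int[mu]_(x in E) (powR (enorm3 (F x)) p)%:E)%E.

Definition inLp3 {d : measure_display} {T : measurableType d} {R : realType}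
  (mu : {measure set T -> \bar R}) (E : set T) (p : R) (F : T -> 'rV[R]_3) : Prop :=
  meas3 E F /\ (intp mu E p F < +oo)%E.

(* Main.v *)
Require Import Defs.
From HB Require Import structures.
From mathcomp Require Import all_boot all_order all_algebra.
From mathcomp Require Import all_classical all_reals all_analysis.
From mathcomp Require Import ring lra.
From mathcomp Require Import measurable_realfun.
Import Order.TTheory GRing.Theory Num.Theory.
Import numFieldNormedType.Exports.
Local Open Scope classical_set_scope.
Local Open Scope ring_scope.
Section S4.
Variable R : realType.
Definition o1 : 'I_3 := Ordinal (isT : (1 < 3)%N).
Definition o2 : 'I_3 := Ordinal (isT : (2 < 3)%N).
Lemma dot3E (u v : 'rV[R]_3) : dot3 u v = u ord0 ord0 * v ord0 ord0 + u ord0 o1 * v ord0 o1 + u ord0 o2 * v ord0 o2.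
Proof. rewrite /dot3 !big_ord_recr big_ord0 /= add0r.
rewrite (_ : widen_ord _ (widen_ord _ ord_max) = ord0); last by apply: val_inj.
rewrite (_ : widen_ord _ ord_max = o1); last by apply: val_inj.
by rewrite (_ : ord_max = o2); last by apply: val_inj.
Qed.
Lemma dot3_ge0 (v : 'rV[R]_3) : 0 <= dot3 v v.
Proof. by rewrite dot3E -!expr2 !addr_ge0 // sqr_ge0. Qed.
Lemma enorm3_sq (v : 'rV[R]_3) : enorm3 v ^+ 2 = dot3 v v.
Proof. by rewrite /enorm3 sqr_sqrtr // dot3_ge0. Qed.
Lemma enorm3_ge0 (v : 'rV[R]_3) : 0 <= enorm3 v.
Proof. exact: sqrtr_ge0. Qed.
Lemma jmapE (v : 'rV[R]_3) i : jmap v ord0 i = (Num.sqrt (enorm3 v))^-1 * v ord0 i.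
Proof.
rewrite /jmap; case: eqP => [->|_]; first by rewrite !mxE mulr0.
by rewrite mxE powRN powR12_sqrt // enorm3_ge0.
Qed.
Lemma CS (a0 a1 a2 b0 b1 b2 : R) :
  `|a0*b0+a1*b1+a2*b2| <= Num.sqrt (a0^+2+a1^+2+a2^+2) * Num.sqrt (b0^+2+b1^+2+b2^+2).
Proof.
set A := a0^+2+a1^+2+a2^+2; set B := b0^+2+b1^+2+b2^+2; set P := a0*b0+a1*b1+a2*b2.
have A0 : 0 <= A by rewrite /A; nra.
have B0 : 0 <= B by rewrite /B; nra.
have sA := sqr_sqrtr A0; have sB := sqr_sqrtr B0.
have sA0 := sqrtr_ge0 A; have sB0 := sqrtr_ge0 B.
have PP : P ^+ 2 <= A * B.
  have E : A * B - P ^+ 2 = (a0*b1-a1*b0)^+2 + (a0*b2-a2*b0)^+2 + (a1*b2-a2*b1)^+2.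
    rewrite /P /A /B; ring.
  have : 0 <= (a0*b1-a1*b0)^+2 + (a0*b2-a2*b0)^+2 + (a1*b2-a2*b1)^+2 by rewrite !addr_ge0 ?sqr_ge0.
  rewrite -E subr_ge0 //.
set s := Num.sqrt A in sA sA0 *; set t := Num.sqrt B in sB sB0 *.
rewrite -sA -sB in PP.
have st0 : 0 <= s * t by nra.
have [P0|P0] := lerP 0 P.
  rewrite ger0_norm //; nra.
rewrite ltr0_norm //; nra.
Qed.

Lemma core_real (a0 a1 a2 b0 b1 b2 : R) :
  forall A B x y, A = a0^+2+a1^+2+a2^+2 -> B = b0^+2+b1^+2+b2^+2 ->
  x = Num.sqrt (Num.sqrt A) -> y = Num.sqrt (Num.sqrt B) ->
  (a0-b0)^+2 + (a1-b1)^+2 + (a2-b2)^+2 <=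
  ((x^-1 * a0 - y^-1 * b0) * (a0 - b0) + (x^-1 * a1 - y^-1 * b1) * (a1 - b1)
   + (x^-1 * a2 - y^-1 * b2) * (a2 - b2)) * (x + y).
Proof.
move=> A B x y hA hB hx hy.
have := CS a0 a1 a2 b0 b1 b2; rewrite -hA -hB => CS0.
set P := a0*b0+a1*b1+a2*b2 in CS0.
have A0 : 0 <= A by rewrite hA; nra.
have B0 : 0 <= B by rewrite hB; nra.
have sA0 := sqrtr_ge0 A; have sB0 := sqrtr_ge0 B.
have x0 : 0 <= x by rewrite hx; exact: sqrtr_ge0.
have y0 : 0 <= y by rewrite hy; exact: sqrtr_ge0.
have x2 : x ^+ 2 = Num.sqrt A by rewrite hx sqr_sqrtr.
have y2 : y ^+ 2 = Num.sqrt B by rewrite hy sqr_sqrtr.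
have sA := sqr_sqrtr A0; have sB := sqr_sqrtr B0.
have PleP := ler_norm P. 
have [x00|xn0] := eqVneq x 0.
  have A00 : A = 0.
    by rewrite -sA -x2 x00 expr0n /= expr0n.
  rewrite x00.
  have : a0 = 0 /\ a1 = 0 /\ a2 = 0 by move: A00; rewrite hA; nra.
  case=> -> [-> ->].
  have [y00|yn0] := eqVneq y 0.
    have B00 : B = 0 by rewrite -sB -y2 y00 expr0n /= expr0n.
    rewrite y00.
    have : b0 = 0 /\ b1 = 0 /\ b2 = 0 by move: B00; rewrite hB; nra.
    by case=> -> [-> ->]; rewrite !invr0; nra.
  have yi : y^-1 * y = 1 by rewrite mulVf.
  rewrite invr0 -subr_ge0 (_ : _ - _ = (b0^+2+b1^+2+b2^+2) * (y^-1 * y - 1)); last by ring.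
  by rewrite yi subrr mulr0.
have [y00|yn0] := eqVneq y 0.
  have B00 : B = 0 by rewrite -sB -y2 y00 expr0n /= expr0n.
  rewrite y00.
  have : b0 = 0 /\ b1 = 0 /\ b2 = 0 by move: B00; rewrite hB; nra.
  case=> -> [-> ->].
  have xi : x^-1 * x = 1 by rewrite mulVf.
  rewrite invr0 -subr_ge0 (_ : _ - _ = (a0^+2+a1^+2+a2^+2) * (x^-1 * x - 1)); last by ring.
  by rewrite xi subrr mulr0.
have xi : x^-1 * x = 1 by rewrite mulVf.
have yi : y^-1 * y = 1 by rewrite mulVf.
have xi0 : 0 <= x^-1 by rewrite invr_ge0.
have yi0 : 0 <= y^-1 by rewrite invr_ge0.
set xi' := x^-1 in xi xi0 *; set yi' := y^-1 in yi yi0 *.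
have E : ((xi' * a0 - yi' * b0) * (a0 - b0) + (xi' * a1 - yi' * b1) * (a1 - b1) +
   (xi' * a2 - yi' * b2) * (a2 - b2)) * (x + y) - ((a0 - b0) ^+ 2 + (a1 - b1) ^+ 2 + (a2 - b2) ^+ 2)
   = (A - P) * (xi' * x) + (B - P) * (yi' * y) + (A - P) * y * xi' + (B - P) * x * yi' - (A + B - 2 * P).
  rewrite hA hB /P; ring.
rewrite -subr_ge0 E xi yi.
have e1 : (A - P) * y * xi' = xi' * yi' * ((A - P) * y * y) by rewrite -[LHS]mulr1 -yi; ring.
have e2 : (B - P) * x * yi' = xi' * yi' * ((B - P) * x * x) by rewrite -[LHS]mulr1 -xi; ring.
rewrite e1 e2.
have -> : (A - P) * 1 + (B - P) * 1 + xi' * yi' * ((A - P) * y * y) + xi' * yi' * ((B - P) * x * x) - (A + B - 2 * P)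
   = xi' * yi' * ((A - P) * y * y + (B - P) * x * x) by ring.
apply: mulr_ge0; first exact: mulr_ge0.
have hA4 : A = x^+2 * x^+2 by rewrite x2 -expr2 sA.
have hB4 : B = y^+2 * y^+2 by rewrite y2 -expr2 sB.
have hP : P <= x^+2 * y^+2 by rewrite x2 y2; lra.
rewrite hA4 hB4; nra.
Qed.

Lemma core_vec (a b : 'rV[R]_3) :
  enorm3 (a - b) ^+ 2 <= dot3 (jmap a - jmap b) (a - b) * (Num.sqrt (enorm3 a) + Num.sqrt (enorm3 b)).
Proof.
rewrite enorm3_sq !dot3E !mxE !jmapE /enorm3 !dot3E -!expr2.
by apply: core_real.
Qed.

Lemma tri_vec (a b : 'rV[R]_3) : enorm3 (a - b) <= enorm3 a + enorm3 b.
Proof.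
have h0 : 0 <= enorm3 a + enorm3 b by rewrite addr_ge0 // enorm3_ge0.
rewrite -(ger0_norm h0) -sqrtr_sqr ler_sqrt ?sqr_ge0 //.
rewrite sqrrD !enorm3_sq /enorm3 !dot3E !mxE -!expr2.
have := CS (a ord0 ord0) (a ord0 o1) (a ord0 o2) (b ord0 ord0) (b ord0 o1) (b ord0 o2).
have := ler_norm (- (a ord0 ord0 * b ord0 ord0 + a ord0 o1 * b ord0 o1 + a ord0 o2 * b ord0 o2)).
rewrite normrN. rewrite mulr2n; nra.
Qed.
End S4.
Section S3.
Variable R : realType.

Lemma powR_le {a b r : R} : 0 <= a -> a <= b -> 0 <= r -> powR a r <= powR b r.
Proof.
move=> a0 ab r0; apply: (ge0_ler_powR r0) => //; rewrite nnegrE //; exact: le_trans ab.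
Qed.

Lemma pw (p theta eps : R) : 1 <= p -> p < 3/2 -> 0 < theta -> 0 < eps ->
  exists C : R, 0 <= C /\ forall al be u g : R, 0 <= al -> 0 <= be -> 0 <= u ->
    u <= al + be -> u ^+ 2 <= g * (Num.sqrt al + Num.sqrt be) ->
    powR u p <= eps + eps * (powR al (3/2) + powR be (3/2)) + C * powR g theta.
Proof.
move=> p1 p32 th0 e0.
have p0 : 0 < p by lra.
set r := 3/2 - p.
have r0 : 0 < r by rewrite /r; lra.
set K := powR 2 p / eps.
have K0 : 0 < K by rewrite /K divr_gt0 // powR_gt0.
set N := powR K r^-1.
have N0 : 0 < N by rewrite /N powR_gt0.
have NrK : powR N r = K by rewrite /N -powRrM mulVf ?gt_eqF // powRr1 // ltW.
set e := Num.min 1 eps.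
have e0' : 0 < e by rewrite /e lt_min ltr01 e0.
have e1 : e <= 1 by rewrite /e ge_min lexx.
have ee : e <= eps by rewrite /e ge_min lexx orbT.
have sN0 : 0 < Num.sqrt N by rewrite sqrtr_gt0.
set de := e ^+ 2 / (2 * Num.sqrt N).
have de0 : 0 < de by rewrite /de divr_gt0 // ?exprn_gt0 // mulr_gt0.
set C := powR (2 * N) p / powR de theta.
have pde0 : 0 < powR de theta by rewrite powR_gt0.
have C0 : 0 <= C by rewrite /C divr_ge0 // ?powR_ge0 // ltW.
exists C; split => // al be u g al0 be0 u0 uab ug.
have [m [alm bem mpw]] : exists m, [/\ al <= m, be <= m &
    powR m (3/2) <= powR al (3/2) + powR be (3/2)].
  have [ab|ba] := leP al be.
    by exists be; split => //; rewrite lerDr powR_ge0.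
  by exists al; split => //; [exact: ltW| rewrite lerDl powR_ge0].
have pa0 := powR_ge0 al (3/2); have pb0 := powR_ge0 be (3/2).
have pg0 := powR_ge0 g theta.
have Cg0 : 0 <= C * powR g theta by exact: mulr_ge0.
have [ue|ue] := leP u e.
  have : powR u p <= e.
    apply: (le_trans (powR_le u0 ue (ltW p0))).
    by apply: ge1r_powR => //; rewrite e0' e1.
  move=> h. have : 0 <= eps * (powR al (3 / 2) + powR be (3 / 2)) by apply: mulr_ge0; lra.
  lra.
have m0 : 0 <= m by exact: le_trans alm.
have [mN|mN] := leP N m.
  have hm0 : 0 < m by exact: lt_le_trans mN.
  have h1 : powR u p <= powR 2 p * powR m p.
    rewrite -powRM //; apply: powR_le => //; lra.
  have h2 : powR m (3/2) = powR m p * powR m r.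
    have -> : (3/2 : R) = p + r by rewrite /r; ring.
    by rewrite powRD // (gt_eqF hm0) implybT.
  have h3 : K <= powR m r by rewrite -NrK; apply: powR_le => //; [exact: ltW| exact: ltW].
  have h4 : powR 2 p = K * eps by rewrite /K divfK // gt_eqF.
  have pm0 := powR_ge0 m p.
  have : powR u p <= eps * powR m (3/2).
    apply: le_trans h1 _; rewrite h2 h4.
    rewrite (mulrC K) -mulrA; apply: ler_wpM2l; first exact: ltW.
    rewrite mulrC; apply: ler_wpM2l => //.
  move=> h; have : eps * powR m (3/2) <= eps * (powR al (3/2) + powR be (3/2)).
    by apply: ler_wpM2l => //; exact: ltW.
  lra.
have sal : Num.sqrt al <= Num.sqrt N by rewrite ler_sqrt; [lra| exact: ltW].
have sbe : Num.sqrt be <= Num.sqrt N by rewrite ler_sqrt; [lra| exact: ltW].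
have sa0 := sqrtr_ge0 al; have sb0 := sqrtr_ge0 be.
have u2 : e ^+ 2 < u ^+ 2 by rewrite ltr_pXn2r // ?nnegrE //; exact: ltW.
have g0 : 0 < g.
  have : 0 < g * (Num.sqrt al + Num.sqrt be) by apply: lt_le_trans ug; apply: lt_trans u2; rewrite exprn_gt0.
  rewrite pmulr_lgt0 //.  
  rewrite lt_neqAle addr_ge0 // andbT.
  apply/negP => /eqP h. move: (ug); rewrite -h mulr0. 
  move=> h'. have : 0 < u ^+ 2 by apply: lt_trans u2; rewrite exprn_gt0.
  lra.
have gde : de <= g.
  rewrite /de ler_pdivrMr; last by rewrite mulr_gt0.
  apply: le_trans (ltW u2) _; apply: le_trans ug _.
  apply: ler_wpM2l; [exact: ltW| lra].
have h1 : powR de theta <= powR g theta by apply: powR_le => //; [exact: ltW| exact: ltW].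
have h2 : powR u p <= powR (2 * N) p by apply: powR_le => //; lra.
have h3 : powR (2 * N) p = C * powR de theta by rewrite /C divfK // gt_eqF.
have : C * powR de theta <= C * powR g theta by exact: ler_wpM2l.
have : 0 <= eps * (powR al (3 / 2) + powR be (3 / 2)) by apply: mulr_ge0; lra.
lra.
Qed.
End S3.
Section M.
Context (d : measure_display) (T : measurableType d) (R : realType) (E : set T).

Lemma meas3B {G H : T -> 'rV[R]_3} : meas3 E G -> meas3 E H -> meas3 E (fun x => G x - H x).
Proof.
move=> mG mH i; rewrite (_ : (fun x => _) = (fun x => G x ord0 i) \- (fun x => H x ord0 i)).
  exact: measurable_funB.
by apply/funext => x /=; rewrite !mxE.
Qed.

Lemma meas_dot3 {G H : T -> 'rV[R]_3} : meas3 E G -> meas3 E H ->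
  measurable_fun E (fun x => dot3 (G x) (H x)).
Proof.
move=> mG mH; rewrite /dot3.
rewrite (_ : (fun x => _) = (fun x => G x ord0 ord0 * H x ord0 ord0) \+
   (fun x => \sum_(i < 2) G x ord0 (lift ord0 i) * H x ord0 (lift ord0 i))).
  apply: measurable_funD; first exact: measurable_funM.
  rewrite (_ : (fun x => _) = (fun x => G x ord0 (lift ord0 ord0) * H x ord0 (lift ord0 ord0)) \+
   (fun x => \sum_(i < 1) G x ord0 (lift ord0 (lift ord0 i)) * H x ord0 (lift ord0 (lift ord0 i)))).
    apply: measurable_funD; first exact: measurable_funM.
    rewrite (_ : (fun x => _) = (fun x => G x ord0 (lift ord0 (lift ord0 ord0)) * H x ord0 (lift ord0 (lift ord0 ord0)))).
      exact: measurable_funM.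
    by apply/funext => x; rewrite big_ord_recl big_ord0 addr0.
  by apply/funext => x; rewrite /= big_ord_recl.
by apply/funext => x; rewrite /= big_ord_recl.
Qed.

Lemma meas_enorm3 {G : T -> 'rV[R]_3} : meas3 E G -> measurable_fun E (fun x => enorm3 (G x)).
Proof.
move=> mG.
rewrite (_ : (fun x => _) = (fun x => powR (dot3 (G x) (G x)) (2^-1))).
 have h := (measurableT_comp (f := (fun y : R => powR y (2^-1))) (g := (fun x => dot3 (G x) (G x))) (@measurable_powR R _) (meas_dot3 mG mG)). exact: h.
apply/funext => x; rewrite powR12_sqrt //.
by rewrite /dot3 sumr_ge0 // => i _; rewrite -expr2 sqr_ge0.
Qed.

Lemma meas_powenorm {G : T -> 'rV[R]_3} p : meas3 E G -> measurable_fun E (fun x => powR (enorm3 (G x)) p).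
Proof.
move=> mG; apply: (measurableT_comp (f := fun y : R => powR y p)); first exact: measurable_powR.
exact: meas_enorm3.
Qed.

Lemma meas_jmap {G : T -> 'rV[R]_3} : meas3 E G -> meas3 E (fun x => jmap (G x)).
Proof.
move=> mG i.
rewrite (_ : (fun x => _) = (fun x => powR (enorm3 (G x)) (- 2^-1)) \* (fun x => G x ord0 i)).
  by apply: measurable_funM => //; exact: meas_powenorm.
apply/funext => x /=; rewrite /jmap; case: eqP => [->|_]; last by rewrite mxE.
by rewrite !mxE mulr0.
Qed.

Lemma meas_g {G H : T -> 'rV[R]_3} th : meas3 E G -> meas3 E H ->
  measurable_fun E (fun x => powR (dot3 (jmap (G x) - jmap (H x)) (G x - H x)) th).
Proof.
move=> mG mH; apply: (measurableT_comp (f := fun y : R => powR y th)); first exact: measurable_powR.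
apply: meas_dot3; apply: meas3B => //; exact: meas_jmap.
Qed.
End M.

Lemma mEFin {d} {T : measurableType d} {R : realType} (E : set T) (g : T -> R) :
  measurable_fun E g -> measurable_fun E (fun x => (g x)%:E).
Proof. by move=> h; apply/measurable_EFinP. Qed.

Theorem lemma8p2 (d : measure_display) (T : measurableType d) (R : realType)
  (mu : {measure set T -> \bar R}) (E : set T)
  (Fn : nat -> T -> 'rV[R]_3) (F : T -> 'rV[R]_3) (theta : R) :
  measurable E -> (mu E < +oo)%E ->
  (forall n, inLp3 mu E (3 / 2) (Fn n)) ->
  (exists M : R, forall n, (intp mu E (3 / 2) (Fn n) <= M%:E)%E) ->
  inLp3 mu E (3 / 2) F ->
  0 < theta ->
  ((\int[mu]_(x in E)
      `| (powR (dot3 (jmap (Fn n x) - jmap (F x)) (Fn n x - F x)) theta)%:E |)%E)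
    @[n --> \oo] --> 0%E ->
  forall p : R, 1 <= p < 3 / 2 ->
    (intp mu E p (fun x => Fn n x - F x)) @[n --> \oo] --> 0%E.
Proof.
move=> mE muE hFn [M hM] hF th0 hq p /andP[p1 p32].
have mFn n : meas3 E (Fn n) := (hFn n).1.
have mF : meas3 E F := hF.1.
have M0 : 0 <= M.
  have h0 : (0 <= intp mu E (3/2) (Fn 0%N))%E.
    by apply: integral_ge0 => x _; rewrite lee_fin powR_ge0.
  by rewrite -lee_fin; apply: le_trans h0 (hM 0%N).
have mu0 : (0 <= mu E)%E by exact: measure_ge0.
have [m [muEf m0]] : exists m, mu E = m%:E /\ 0 <= m.
  exists (fine (mu E)).
  have e : mu E = (fine (mu E))%:E by rewrite fineK // ge0_fin_numE.
  by split => //; rewrite -lee_fin -e.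
have [b [hFf b0]] : exists b, intp mu E (3/2) F = b%:E /\ 0 <= b.
  have hF0 : (0 <= intp mu E (3/2) F)%E.
    by apply: integral_ge0 => x _; rewrite lee_fin powR_ge0.
  exists (fine (intp mu E (3/2) F)).
  have e : intp mu E (3/2) F = (fine (intp mu E (3/2) F))%:E.
    by rewrite fineK // ge0_fin_numE // hF.2.
  by split => //; rewrite -lee_fin -e.
have E1 : (fun n => (\int[mu]_(x in E)
      `| (powR (dot3 (jmap (Fn n x) - jmap (F x)) (Fn n x - F x)) theta)%:E |)%E) =
   (fun n => (\int[mu]_(x in E)
      (powR (dot3 (jmap (Fn n x) - jmap (F x)) (Fn n x - F x)) theta)%:E)%E).
  by apply/funext => n; apply: eq_integral => x _; rewrite gee0_abs // lee_fin powR_ge0.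
rewrite E1 in hq.
move/fine_cvgP: hq => [hqfin hqc].
have claim : forall eps : R, 0 < eps -> \forall n \near \oo,
    (intp mu E p (fun x => (Fn n x - F x)%R) <= eps%:E)%E.
  move=> eps eps0.
  set K0 := m + M + b + 1.
  have K00 : 0 < K0 by rewrite /K0; lra.
  set ep := eps / (2 * K0).
  have ep0 : 0 < ep by rewrite /ep divr_gt0 // mulr_gt0.
  have epK : ep * K0 * 2 = eps by rewrite /ep; field; rewrite gt_eqF.
  have [C [C0 hC]] := @pw R p theta ep p1 p32 th0 ep0.
  set eta := eps / (2 * (C + 1)).
  have eta0 : 0 < eta by rewrite /eta divr_gt0 // mulr_gt0 //; lra.
  have etaC : (C + 1) * eta * 2 = eps by rewrite /eta; field; rewrite gt_eqF //; lra.
  have hnear := (cvgr0Pnorm_le _).1 hqc eta eta0.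
  apply: (filterS2 _ _ hqfin (hnear _)) => n hfin hle.
  set Q := fun x => powR (dot3 (jmap (Fn n x) - jmap (F x)) (Fn n x - F x)) theta.
  have mQ : measurable_fun E Q by exact: meas_g.
  have mA : measurable_fun E (fun x => powR (enorm3 (Fn n x)) (3/2)) by exact: meas_powenorm.
  have mB : measurable_fun E (fun x => powR (enorm3 (F x)) (3/2)) by exact: meas_powenorm.
  have mU : measurable_fun E (fun x => powR (enorm3 (Fn n x - F x)) p).
    by apply: meas_powenorm; exact: meas3B.
  have step1 : (intp mu E p (fun x => (Fn n x - F x)%R) <= \int[mu]_(x in E)
      (ep + ep * powR (enorm3 (Fn n x)) (3/2) + ep * powR (enorm3 (F x)) (3/2)
        + C * Q x)%:E)%E.
    apply: ge0_le_integral => //.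
    - by move=> x _; rewrite lee_fin powR_ge0.
    - exact: mEFin mU.
    - apply: mEFin.
      exact: (measurable_funD (measurable_funD (measurable_funD (measurable_cst ep)
        (measurable_funM (measurable_cst ep) mA)) (measurable_funM (measurable_cst ep) mB))
        (measurable_funM (measurable_cst C) mQ)).
    - move=> x _; rewrite lee_fin.
      have := hC _ _ _ (dot3 (jmap (Fn n x) - jmap (F x)) (Fn n x - F x))
        (@enorm3_ge0 R (Fn n x)) (@enorm3_ge0 R (F x)) (@enorm3_ge0 R (Fn n x - F x))
        (@tri_vec R (Fn n x) (F x)) (@core_vec R (Fn n x) (F x)).
      by rewrite mulrDr !addrA.
  have eqI : (\int[mu]_(x in E)
      (ep + ep * powR (enorm3 (Fn n x)) (3/2) + ep * powR (enorm3 (F x)) (3/2)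
        + C * Q x)%:E = \int[mu]_(x in E)
      ((ep%:E + (ep * powR (enorm3 (Fn n x)) (3/2))%:E) + (ep * powR (enorm3 (F x)) (3/2))%:E
        + (C * Q x)%:E))%E.
    by apply: eq_integral => x _; rewrite !EFinD.
  rewrite eqI in step1.
  apply: le_trans step1 _.
  have nA : forall x, E x -> (0 <= (ep * powR (enorm3 (Fn n x)) (3/2))%:E)%E.
    by move=> x _; rewrite lee_fin mulr_ge0 ?powR_ge0 // ltW.
  have nB : forall x, E x -> (0 <= (ep * powR (enorm3 (F x)) (3/2))%:E)%E.
    by move=> x _; rewrite lee_fin mulr_ge0 ?powR_ge0 // ltW.
  have nQ : forall x, E x -> (0 <= (C * Q x)%:E)%E.
    by move=> x _; rewrite lee_fin mulr_ge0 ?powR_ge0.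
  have me : measurable_fun E (fun x : T => ep%:E) by exact: measurable_cst.
  have mA' : measurable_fun E (fun x => (ep * powR (enorm3 (Fn n x)) (3/2))%:E).
    exact: mEFin (measurable_funM (measurable_cst ep) mA).
  have mB' : measurable_fun E (fun x => (ep * powR (enorm3 (F x)) (3/2))%:E).
    exact: mEFin (measurable_funM (measurable_cst ep) mB).
  have mQ' : measurable_fun E (fun x => (C * Q x)%:E).
    exact: mEFin (measurable_funM (measurable_cst C) mQ).
  have n3 : forall x, E x -> (0 <= ep%:E)%E by move=> x _; rewrite lee_fin ltW.
  have n2 : forall x, E x -> (0 <= ep%:E + (ep * powR (enorm3 (Fn n x)) (3/2))%:E)%E.
    move=> x Ex; apply: adde_ge0; first exact: (n3 x Ex).
    exact: (nA x Ex).
  have m2 : measurable_fun E (fun x => ep%:E + (ep * powR (enorm3 (Fn n x)) (3/2))%:E)%E.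
    exact: emeasurable_funD.
  have n1 : forall x, E x -> (0 <= ep%:E + (ep * powR (enorm3 (Fn n x)) (3/2))%:E
                               + (ep * powR (enorm3 (F x)) (3/2))%:E)%E.
    move=> x Ex; apply: adde_ge0; first exact: (n2 x Ex).
    exact: (nB x Ex).
  have m1 : measurable_fun E (fun x => ep%:E + (ep * powR (enorm3 (Fn n x)) (3/2))%:E
                               + (ep * powR (enorm3 (F x)) (3/2))%:E)%E.
    exact: emeasurable_funD.
  rewrite (ge0_integralD mu mE n1 m1 nQ mQ').
  rewrite (ge0_integralD mu mE n2 m2 nB mB').
  rewrite (ge0_integralD mu mE n3 me nA mA').
  have -> : (\int[mu]_(x in E) ep%:E = ep%:E * mu E)%E by rewrite integral_cst.
  have nA0 : forall x, E x -> (0 <= (powR (enorm3 (Fn n x)) (3/2))%:E)%E.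
    by move=> x _; rewrite lee_fin powR_ge0.
  have nB0 : forall x, E x -> (0 <= (powR (enorm3 (F x)) (3/2))%:E)%E.
    by move=> x _; rewrite lee_fin powR_ge0.
  have nQ0 : forall x, E x -> (0 <= (Q x)%:E)%E.
    by move=> x _; rewrite lee_fin powR_ge0.
  have mA0 : measurable_fun E (fun x => (powR (enorm3 (Fn n x)) (3/2))%:E).
    exact: mEFin mA.
  have mB0 : measurable_fun E (fun x => (powR (enorm3 (F x)) (3/2))%:E).
    exact: mEFin mB.
  have mQ0 : measurable_fun E (fun x => (Q x)%:E).
    exact: mEFin mQ.
  have -> : (\int[mu]_(x in E) (ep * powR (enorm3 (Fn n x)) (3/2))%:E
        = ep%:E * intp mu E (3/2) (Fn n))%E.
    rewrite -(ge0_integralZl_EFin mu mE nA0 mA0 (ltW ep0)).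
    by apply: eq_integral => x _; rewrite EFinM.
  have -> : (\int[mu]_(x in E) (ep * powR (enorm3 (F x)) (3/2))%:E
        = ep%:E * intp mu E (3/2) F)%E.
    rewrite -(ge0_integralZl_EFin mu mE nB0 mB0 (ltW ep0)).
    by apply: eq_integral => x _; rewrite EFinM.
  have -> : (\int[mu]_(x in E) (C * Q x)%:E
        = C%:E * \int[mu]_(x in E) (Q x)%:E)%E.
    rewrite -(ge0_integralZl_EFin mu mE nQ0 mQ0 C0).
    by apply: eq_integral => x _; rewrite EFinM.
  have [a [hAf aM aa0]] : exists a, [/\ intp mu E (3/2) (Fn n) = a%:E, a <= M & 0 <= a].
    have a0 : (0 <= intp mu E (3/2) (Fn n))%E.
      by apply: integral_ge0 => x _; rewrite lee_fin powR_ge0.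
    have hfa : intp mu E (3/2) (Fn n) \is a fin_num.
      rewrite ge0_fin_numE //; exact: (le_lt_trans (hM n) (ltry M)).
    exists (fine (intp mu E (3/2) (Fn n))).
    have e : intp mu E (3/2) (Fn n) = (fine (intp mu E (3/2) (Fn n)))%:E by rewrite fineK.
    split => //; rewrite -lee_fin -e //; exact: hM.
  have [q [hQf qq0 qeta]] : exists q, [/\ (\int[mu]_(x in E) (Q x)%:E)%E = q%:E, 0 <= q & q <= eta].
    have q0 : (0 <= \int[mu]_(x in E) (Q x)%:E)%E.
      by apply: integral_ge0 => x _; rewrite lee_fin powR_ge0.
    exists (fine (\int[mu]_(x in E) (Q x)%:E)%E).
    have e : (\int[mu]_(x in E) (Q x)%:E = (fine (\int[mu]_(x in E) (Q x)%:E))%:E)%E.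
      by rewrite fineK.
    have q1 : 0 <= fine (\int[mu]_(x in E) (Q x)%:E)%E by rewrite -lee_fin -e.
    split => //.
    by move: hle; rewrite /= ger0_norm.
  rewrite hAf hFf hQf muEf.
  have -> : (ep%:E * m%:E + ep%:E * a%:E + ep%:E * b%:E + C%:E * q%:E
     = (ep * m + ep * a + ep * b + C * q)%:E)%E by rewrite !EFinD !EFinM.
  rewrite lee_fin.
  have h1 : ep * m + ep * a + ep * b <= ep * K0.
    rewrite -!mulrDr; apply: ler_wpM2l; [exact: ltW| rewrite /K0; lra].
  have h2 : C * q <= (C + 1) * eta.
    apply: le_trans (_ : C * eta <= _); first exact: ler_wpM2l.
    by apply: ler_wpM2r; [exact: ltW| lra].
  lra.
apply/fine_cvgP; split.
  apply: (filterS _ (claim 1 ltr01)) => n h.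
  rewrite ge0_fin_numE; first by apply: le_lt_trans h _; rewrite ltry.
  by apply: integral_ge0 => x _; rewrite lee_fin powR_ge0.
apply/cvgr0Pnorm_le => eps eps0.
apply: (filterS _ (claim eps eps0)) => n h /=.
have h0 : (0 <= intp mu E p (fun x => (Fn n x - F x)%R))%E.
  by apply: integral_ge0 => x _; rewrite lee_fin powR_ge0.
rewrite ger0_norm ?fine_ge0 //.
by rewrite -lee_fin fineK // ge0_fin_numE // (le_lt_trans h) // ltry.
Qed.
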